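(* Let $\Bbbk$ be a field, $A$ a $\Bbbk$-algebra, $\Gamma$ a subalgebra, and $\sim$ an equivalence relation on $\mathrm{cfs}(\Gamma)$ such that $\Gamma$ is a strong Harish-Chandra block subalgebra of $A$ with respect to $\sim$. Let $B\in\mathrm{cfs}(\Gamma)/{\sim}$. Suppose $B$ is finite, $\Gamma$ is noetherian, and $\mathcal A(B,B)$ is finitely generated as a left and as a right $\hat\Gamma_B$-module. Then: (i) there are finitely many isomorphism classes of simple Harish-Chandra block modules $V$ with $B\in\mathrm{Supp}(V)$; (ii) if $V$ is a simple Harish-Chandra block module, then $V(B)$ is finite-dimensional.
   Context: All algebras are associative unital $\Bbbk$-algebras. $\mathrm{cfs}(\Gamma)$ is the set of maximal two-sided ideals $\mathfrak m$ with $\dim\Gamma/\mathfrak m<\infty$. For a class $B$, $\mathcal W(B)=\{\mathfrak m_1\cdots\mathfrak m_k:k\ge0,\ \mathfrak m_i\in B\}$. For a left $\Gamma$-module $V$, $V(B)=\{v:\mathfrak mv=0$ for some $\mathfrak m\in\mathcal W(B)\}$ (analogously for right modules); $V$ is a block module if $V=\bigoplus_BV(B)$, $\mathrm{Supp}(V)=\{B:V(B)\ne0\}$, and a strong block module if also each $V(B)$ is killed by some $\mathfrak m\in\mathcal W(B)$. A Harish-Chandra block module is an $A$-module that is a block module over $\Gamma$. $\Gamma$ is a strong Harish-Chandra block subalgebra of $A$ if for all $B$ and $\mathfrak m\in\mathcal W(B)$, the left $A$-module $A/A\mathfrak m$ and the right module $A/\mathfrak mA$ are strong block modules over $\Gamma$.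 $\hat\Gamma_B=\varprojlim_{\mathfrak m\in\mathcal W(B)}\Gamma/\mathfrak m$ and $\mathcal A(B,B)=\varprojlim_{\mathfrak n,\mathfrak m\in\mathcal W(B)}A/(\mathfrak nA+A\mathfrak m)$, which is a $(\hat\Gamma_B,\hat\Gamma_B)$-bimodule via the natural actions of $\Gamma/\mathfrak n$ on the left and $\Gamma/\mathfrak m$ on the right of $A/(\mathfrak nA+A\mathfrak m)$. *)

(* Defs.v *)
From HB Require Import structures.
From mathcomp Require Import all_boot all_order all_algebra.
Set Implicit Arguments. Unset Strict Implicit. Unset Printing Implicit Defensive.
Import GRing.Theory.
Local Open Scope ring_scope.

Section HCDefs.
Variables (k : fieldType) (A : algType k).
Implicit Types (G I J m : A -> Prop).

Definition incl (I J : A -> Prop) := forall x, I x -> J x.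

Definition is_subalg G :=
  [/\ G 1, (forall x y, G x -> G y -> G (x + y)), (forall x, G x -> G (- x)),
      (forall x y, G x -> G y -> G (x * y)) & (forall (c : k) x, G x -> G (c *: x))].

Definition is_addsub I :=
  [/\ I 0, (forall x y, I x -> I y -> I (x + y)) & (forall x, I x -> I (- x))].
Definition left_ideal G I :=
  [/\ incl I G, is_addsub I & (forall g x, G g -> I x -> I (g * x))].
Definition right_ideal G I :=
  [/\ incl I G, is_addsub I & (forall g x, G g -> I x -> I (x * g))].
Definition ideal2 G I := left_ideal G I /\ right_ideal G I.

(* dim G/I < oo : G is spanned modulo I by finitely many elements *)
Definition fin_codim G I :=
  exists (n : nat) (e : 'I_n -> A), (forall i, G (e i)) /\
    forall x, G x -> exists c : 'I_n -> k, I (x - \sum_(i < n) c i *: e i).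

(* cfs(G): maximal two-sided ideals of finite codimension *)
Definition cfs G m :=
  [/\ ideal2 G m, ~ m 1,
      (forall J, ideal2 G J -> incl m J -> incl J m \/ incl G J)
    & fin_codim G m].

Definition equiv_on_cfs G (rel : (A -> Prop) -> (A -> Prop) -> Prop) :=
  [/\ (forall m, cfs G m -> rel m m),
      (forall m n, cfs G m -> cfs G n -> rel m n -> rel n m)
    & (forall m n p, cfs G m -> cfs G n -> cfs G p -> rel m n -> rel n p -> rel m p)].

Definition cls G rel (r : A -> Prop) : (A -> Prop) -> Prop :=
  fun m => cfs G m /\ rel m r.

Definition idealMul I J : A -> Prop := fun z =>
  exists (n : nat) (x y : 'I_n -> A),
    (forall i, I (x i) /\ J (y i)) /\ z = \sum_(i < n) x i * y i.

Definition prodI G (s : seq (A -> Prop)) : A -> Prop := foldr idealMul G s.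

Fixpoint allP (P : (A -> Prop) -> Prop) (s : seq (A -> Prop)) : Prop :=
  if s is J :: s' then P J /\ allP P s' else True.

(* I \in W(Bc) : I is a product m_1 ... m_k (k >= 0) of ideals of Bc *)
Definition Wset G (Bc : (A -> Prop) -> Prop) I :=
  exists s, allP Bc s /\ forall x, I x <-> prodI G s x.

Definition leftGen I : A -> Prop := fun z =>
  exists (n : nat) (a x : 'I_n -> A), (forall i, I (x i)) /\ z = \sum_(i < n) a i * x i.
Definition rightGen I : A -> Prop := fun z =>
  exists (n : nat) (a x : 'I_n -> A), (forall i, I (x i)) /\ z = \sum_(i < n) x i * a i.
Definition biGen I J : A -> Prop := fun z =>
  exists u w, rightGen I u /\ leftGen J w /\ z = u + w.

(* Block-module notions for the G-module M/N, where G acts on M via act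
   (act x v is the action of x in G, on the left or on the right), and
   N is the submodule we quotient by. *)
Section Block.
Variables (M : zmodType) (act : A -> M -> M) (N : M -> Prop).

Definition kills I (v : M) := forall x, I x -> N (act x v).

(* v is in V(B) where B is the class of r *)
Definition part G rel (r : A -> Prop) (v : M) :=
  exists I, Wset G (cls G rel r) I /\ kills I v.

Definition is_block G rel :=
  (forall v : M, exists (n : nat) (r : 'I_n -> A -> Prop) (w : 'I_n -> M),
     [/\ (forall i, cfs G (r i)), (forall i j, i != j -> ~ rel (r i) (r j)),
         (forall i, part G rel (r i) (w i)) & N (v - \sum_(i < n) w i)]) /\
  (forall (n : nat) (r : 'I_n -> A -> Prop) (w : 'I_n -> M),
     (forall i, cfs G (r i)) -> (forall i j, i != j -> ~ rel (r i) (r j)) ->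
     (forall i, part G rel (r i) (w i)) -> N (\sum_(i < n) w i) ->
     forall i, N (w i)).

Definition is_strong_block G rel :=
  is_block G rel /\
  forall r, cfs G r -> exists I, Wset G (cls G rel r) I /\
     forall v, part G rel r v -> kills I v.

Definition in_supp G rel (r : A -> Prop) :=
  exists v, part G rel r v /\ ~ N v.
End Block.

Definition strong_HC_block_subalg G rel :=
  forall r, cfs G r -> forall I, Wset G (cls G rel r) I ->
    is_strong_block (fun x (a : A) => x * a) (leftGen I) G rel /\
    is_strong_block (fun x (a : A) => a * x) (rightGen I) G rel.

Definition noetherian G :=
  (forall C : nat -> A -> Prop, (forall n, left_ideal G (C n)) ->
     (forall n, incl (C n) (C n.+1)) -> exists n0, forall n, incl (C n) (C n0)) /\
  (forall C : nat -> A -> Prop, (forall n, right_ideal G (C n)) ->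
     (forall n, incl (C n) (C n.+1)) -> exists n0, forall n, incl (C n) (C n0)).

Definition finite_class G rel r :=
  exists (n : nat) (ms : 'I_n -> A -> Prop),
    forall m, cls G rel r m -> exists i, forall x, m x <-> ms i x.

(* Completion hat(G)_B = lim_{I in W(B)} G/I : elements are compatible
   families of representatives f I in G (modulo I). *)
Definition hatG_el G Bc (f : (A -> Prop) -> A) :=
  (forall I, Wset G Bc I -> G (f I)) /\
  (forall I J, Wset G Bc I -> Wset G Bc J -> incl I J -> J (f I - f J)).

(* A(B,B) = lim_{n,m in W(B)} A/(nA + Am) *)
Definition ABB_el G Bc (F : (A -> Prop) -> (A -> Prop) -> A) :=
  forall n m n' m', Wset G Bc n -> Wset G Bc m -> Wset G Bc n' -> Wset G Bc m' ->
    incl n n' -> incl m m' -> biGen n' m' (F n m - F n' m').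

Definition ABB_eq G Bc (F F' : (A -> Prop) -> (A -> Prop) -> A) :=
  forall n m, Wset G Bc n -> Wset G Bc m -> biGen n m (F n m - F' n m).

Definition ABB_fg_left G Bc :=
  exists (r : nat) (E : 'I_r -> (A -> Prop) -> (A -> Prop) -> A),
    (forall i, ABB_el G Bc (E i)) /\
    forall F, ABB_el G Bc F -> exists c : 'I_r -> (A -> Prop) -> A,
      (forall i, hatG_el G Bc (c i)) /\
      ABB_eq G Bc F (fun n m => \sum_(i < r) c i n * E i n m).

Definition ABB_fg_right G Bc :=
  exists (r : nat) (E : 'I_r -> (A -> Prop) -> (A -> Prop) -> A),
    (forall i, ABB_el G Bc (E i)) /\
    forall F, ABB_el G Bc F -> exists c : 'I_r -> (A -> Prop) -> A,
      (forall i, hatG_el G Bc (c i)) /\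
      ABB_eq G Bc F (fun n m => \sum_(i < r) E i n m * c i m).

Definition submod (V : lmodType A) (U : V -> Prop) :=
  [/\ U 0, (forall u v, U u -> U v -> U (u + v)) & (forall (a : A) u, U u -> U (a *: u))].

Definition simple_mod (V : lmodType A) :=
  (exists v : V, v != 0) /\
  forall U : V -> Prop, submod U -> (forall v, U v -> v = 0) \/ (forall v, U v).

Definition mod_iso (V W : lmodType A) :=
  exists f : V -> W, [/\ (forall u v, f (u + v) = f u + f v),
                         (forall (a : A) v, f (a *: v) = a *: f v) & bijective f].

Definition modact (V : lmodType A) : A -> V -> V := fun x v => x *: v.
Definition is0 (V : lmodType A) : V -> Prop := fun v => v = 0.

Definition HC_block_mod G rel (V : lmodType A) :=
  is_block (@modact V) (@is0 V) G rel.

Definition part_findim G rel r (V : lmodType A) :=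
  exists (n : nat) (e : 'I_n -> V), forall v, part (@modact V) (@is0 V) G rel r v ->
    exists c : 'I_n -> k, v = \sum_(i < n) (c i)%:A *: e i.

End HCDefs.

(* Main.v *)
From HB Require Import structures.
From mathcomp Require Import all_boot all_order all_algebra.
From mathcomp Require Import zify.
Require Stdlib.Logic.ClassicalEpsilon Stdlib.Logic.FunctionalExtensionality Stdlib.Logic.PropExtensionality Stdlib.Logic.Classical.
Require Import Defs.
Set Implicit Arguments. Unset Strict Implicit. Unset Printing Implicit Defensive.
Import GRing.Theory.
Local Open Scope ring_scope.

Definition asb (P : Prop) : bool :=
  if ClassicalEpsilon.excluded_middle_informative P then true else false.
Lemma asbP (P : Prop) : reflect P (asb P).
Proof. by rewrite /asb; case: ClassicalEpsilon.excluded_middle_informative => h; constructor. Qed.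
Lemma asbT (P : Prop) : P -> asb P.
Proof. by move/asbP. Qed.
Lemma asbF (P : Prop) : ~ P -> asb P = false.
Proof. by move=> h; apply/negbTE/asbP. Qed.

Lemma pred_ext (T : Type) (P Q : T -> Prop) : (forall x, P x <-> Q x) -> P = Q.
Proof.
move=> h; apply: FunctionalExtensionality.functional_extensionality => x.
exact: PropExtensionality.propositional_extensionality.
Qed.

Section Sums.
Variables (k : fieldType) (A : algType k).
Implicit Types (P Q : A -> Prop).

Definition sumsL P z := exists s : seq A, (forall x, x \in s -> P x) /\ z = \sum_(x <- s) x.

Lemma sumsL0 P : sumsL P 0.
Proof. by exists [::]; rewrite big_nil. Qed.
Lemma sumsL1 P x : P x -> sumsL P x.
Proof. by move=> h; exists [:: x]; rewrite big_seq1; split=> // y; rewrite inE => /eqP->. Qed.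
Lemma sumsLD P x y : sumsL P x -> sumsL P y -> sumsL P (x + y).
Proof.
move=> [s [hs ->]] [t [ht ->]]; exists (s ++ t); rewrite big_cat; split=> // z.
by rewrite mem_cat => /orP[/hs|/ht].
Qed.
Lemma sumsL_ind P Q : Q 0 -> (forall x y, Q x -> Q y -> Q (x + y)) ->
  (forall x, P x -> Q x) -> forall z, sumsL P z -> Q z.
Proof.
move=> h0 hD hP z [s [hs ->]]; elim: s hs => [|a s IH] hs; first by rewrite big_nil.
rewrite big_cons; apply: hD; first by apply/hP/hs; rewrite inE eqxx.
by apply: IH => x hx; apply: hs; rewrite inE hx orbT.
Qed.
Lemma sumsL_map P Q (f : A -> A) : f 0 = 0 -> (forall x y, f (x + y) = f x + f y) ->
  (forall x, P x -> Q (f x)) -> forall z, sumsL P z -> sumsL Q (f z).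
Proof.
move=> f0 fD hPQ z; apply: (@sumsL_ind P (fun z => sumsL Q (f z))) => [|x y hx hy|x hx].
- by rewrite f0; apply: sumsL0.
- by rewrite fD; apply: sumsLD.
- by apply: sumsL1; exact: hPQ.
Qed.
Lemma sumsL_mono P Q z : (forall x, P x -> Q x) -> sumsL P z -> sumsL Q z.
Proof. by move=> h [s [hs ->]]; exists s; split=> // x /hs /h. Qed.
Lemma sumsL_big P (I : Type) (r : seq I) (F : I -> A) :
  (forall i, sumsL P (F i)) -> sumsL P (\sum_(i <- r) F i).
Proof.
move=> h; elim: r => [|i r IH]; first by rewrite big_nil; apply: sumsL0.
by rewrite big_cons; apply: sumsLD.
Qed.

Lemma fam_sums2 (Q : A -> A -> Prop) (op : A -> A -> A) z :
  (exists n (a b : 'I_n -> A), (forall i, Q (a i) (b i)) /\ z = \sum_(i < n) op (a i) (b i))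
  <-> sumsL (fun y => exists a b, Q a b /\ y = op a b) z.
Proof.
split.
- move=> [n [a [b [hQ ->]]]].
  apply: sumsL_big => i; apply: sumsL1; exists (a i), (b i); split=> //.
- move=> [s [hs ->]].
  have: forall i : 'I_(size s), exists ab : A * A,
      Q ab.1 ab.2 /\ nth 0 s i = op ab.1 ab.2.
    move=> i; have := hs _ (mem_nth 0 (ltn_ord i)) => [[a [b [h1 h2]]]].
    by exists (a, b).
  move/fin_all_exists=> [f hf]; exists (size s), (fun i => (f i).1), (fun i => (f i).2).
  split; first by move=> i; case: (hf i).
  rewrite (big_nth 0) big_mkord; apply: eq_bigr => i _; by case: (hf i).
Qed.

Lemma leftGenE I z : leftGen I z <-> sumsL (fun y => exists a x, I x /\ y = a * x) z.
Proof. exact: (@fam_sums2 (fun a x => I x) (fun a x => a * x)). Qed.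
Lemma rightGenE I z : rightGen I z <-> sumsL (fun y => exists a x, I x /\ y = x * a) z.
Proof. exact: (@fam_sums2 (fun a x => I x) (fun a x => x * a)). Qed.
Lemma idealMulE I J z : idealMul I J z <-> sumsL (fun y => exists x w, (I x /\ J w) /\ y = x * w) z.
Proof. exact: (@fam_sums2 (fun x w => I x /\ J w) (fun x w => x * w)). Qed.

End Sums.

Section Ideals.
Variables (k : fieldType) (A : algType k) (G : A -> Prop).
Hypothesis HG : is_subalg G.
Implicit Types (I J m : A -> Prop).

Lemma G1 : G 1. Proof. by case: HG. Qed.
Lemma GD x y : G x -> G y -> G (x + y). Proof. by case: HG => _ h _ _ _; apply: h. Qed.
Lemma GN x : G x -> G (- x). Proof. by case: HG => _ _ h _ _; apply: h. Qed.
Lemma GM x y : G x -> G y -> G (x * y). Proof. by case: HG => _ _ _ h _; apply: h. Qed.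
Lemma GZ c x : G x -> G (c *: x). Proof. by case: HG => _ _ _ _ h; apply: h. Qed.
Lemma G0 : G 0. Proof. by rewrite -(addrN 1); apply: GD; [apply: G1|apply/GN/G1]. Qed.
Lemma Galg c : G (c%:A). Proof. by apply/GZ/G1. Qed.

Lemma add_sum (I P : A -> Prop) : is_addsub I -> (forall x, P x -> I x) ->
  forall z, sumsL P z -> I z.
Proof. by case=> h0 hD _; apply: sumsL_ind. Qed.

Lemma addsubB I x y : is_addsub I -> I x -> I y -> I (x - y).
Proof. by case=> _ hD hN hx hy; apply/hD/hN. Qed.

Lemma li_sub I : left_ideal G I -> incl I G. Proof. by case. Qed.
Lemma li_add I : left_ideal G I -> is_addsub I. Proof. by case. Qed.
Lemma li_mul I : left_ideal G I -> forall g x, G g -> I x -> I (g * x). Proof. by case. Qed.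
Lemma ri_sub I : right_ideal G I -> incl I G. Proof. by case. Qed.
Lemma ri_add I : right_ideal G I -> is_addsub I. Proof. by case. Qed.
Lemma ri_mul I : right_ideal G I -> forall g x, G g -> I x -> I (x * g). Proof. by case. Qed.

Lemma ideal2G : ideal2 G G.
Proof.
have ha : is_addsub G by split; [apply: G0|apply: GD|apply: GN].
by split; split=> // g x hg hx; apply: GM.
Qed.

Lemma idealMul_subR I J : left_ideal G J -> incl I G -> incl (idealMul I J) J.
Proof.
move=> [hJG hJa hJl] hIG z /idealMulE; apply: add_sum => //.
by move=> _ [x [w [[hx hw] ->]]]; apply: hJl => //; apply: hIG.
Qed.
Lemma idealMul_subL I J : right_ideal G I -> incl J G -> incl (idealMul I J) I.
Proof.
move=> [hIG hIa hIr] hJG z /idealMulE; apply: add_sum => //.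
by move=> _ [x [w [[hx hw] ->]]]; apply: hIr => //; apply: hJG.
Qed.
Lemma idealMul_mono I J J' : incl J J' -> incl (idealMul I J) (idealMul I J').
Proof.
move=> h z [n [x [y [hxy ->]]]]; exists n, x, y; split=> // i.
by case: (hxy i) => h1 h2; split=> //; apply: h.
Qed.
Lemma idealMul_in I J x y : I x -> J y -> idealMul I J (x * y).
Proof.
move=> hx hy; exists 1%N, (fun=> x), (fun=> y); split=> //.
by rewrite big_ord1.
Qed.

Lemma idealMul_ideal2 I J : ideal2 G I -> ideal2 G J -> ideal2 G (idealMul I J).
Proof.
move=> [hIl hIr] [hJl hJr].
have hsub : incl (idealMul I J) G.
  by move=> z /(idealMul_subR hJl (li_sub hIl)); apply: (li_sub hJl).
have ha : is_addsub (idealMul I J).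
  split.
  - by apply/idealMulE/sumsL0.
  - by move=> x y /idealMulE hx /idealMulE hy; apply/idealMulE/sumsLD.
  - move=> x /idealMulE hx; apply/idealMulE.
    apply: (@sumsL_map _ _ _ _ (fun z => - z) _ _ _ x hx) => [|a b|z0 [a [b [[ha0 hb] ->]]]].
    + by rewrite oppr0.
    + by rewrite opprD.
    + exists (- a), b; split; last by rewrite mulNr.
      by split=> //; case: (li_add hIl) => _ _; apply.
split; split=> //.
- move=> g z hg /idealMulE hz; apply/idealMulE.
  apply: (@sumsL_map _ _ _ _ (fun z => g * z) _ _ _ z hz) => [|a b|z0 [a [b [[ha0 hb] ->]]]].
  + by rewrite mulr0.
  + by rewrite mulrDr.
  + exists (g * a), b; split; last by rewrite mulrA.
    by split=> //; apply: (li_mul hIl).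
- move=> g z hg /idealMulE hz; apply/idealMulE.
  apply: (@sumsL_map _ _ _ _ (fun z => z * g) _ _ _ z hz) => [|a b|z0 [a [b [[ha0 hb] ->]]]].
  + by rewrite mul0r.
  + by rewrite mulrDl.
  + exists a, (b * g); split; last by rewrite mulrA.
    by split=> //; apply: (ri_mul hJr).
Qed.

Lemma allP_mono (P Q : (A -> Prop) -> Prop) s : (forall m, P m -> Q m) -> allP P s -> allP Q s.
Proof. by move=> h; elim: s => //= m s IH [h1 h2]; split; [apply: h|apply: IH]. Qed.
Lemma allP_cat (P : (A -> Prop) -> Prop) s t : allP P s -> allP P t -> allP P (s ++ t).
Proof. by elim: s => //= m s IH [h1 h2] ht; split=> //; apply: IH. Qed.

Lemma prodI_ideal s : allP (ideal2 G) s -> ideal2 G (prodI G s).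
Proof.
elim: s => [|m s IH] /=; first by move=> _; apply: ideal2G.
by move=> [hm hs]; apply: idealMul_ideal2 => //; apply: IH.
Qed.

Lemma prodI_sub s : allP (ideal2 G) s -> incl (prodI G s) G.
Proof. by move/prodI_ideal => [[h _ _] _]. Qed.

Lemma prodI_catR s t : allP (ideal2 G) s -> allP (ideal2 G) t ->
  incl (prodI G (s ++ t)) (prodI G t).
Proof.
elim: s => [|m s IH] /= hs ht; first by [].
case: hs => hm hs x hx.
apply: IH => //; apply: (idealMul_subR _ (li_sub (proj1 hm))) hx.
by case: (prodI_ideal (allP_cat hs ht)).
Qed.

Lemma prodI_catL s t : allP (ideal2 G) t -> incl (prodI G (s ++ t)) (prodI G s).
Proof.
move=> ht; elim: s => [|m s IH] /=; first by apply: prodI_sub.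
by move=> x; apply: idealMul_mono.
Qed.

Lemma prodI_head m s : ideal2 G m -> allP (ideal2 G) s -> incl (prodI G (m :: s)) m.
Proof. by move=> [_ hm] hs; apply: idealMul_subL => //; apply: prodI_sub. Qed.

End Ideals.

Section Parts.
Variables (k : fieldType) (A : algType k) (G : A -> Prop)
  (rel : (A -> Prop) -> (A -> Prop) -> Prop).
Hypothesis HG : is_subalg G.
Hypothesis HE : equiv_on_cfs G rel.
Implicit Types (I J m r : A -> Prop).

Lemma cls_ideal r m : cls G rel r m -> ideal2 G m.
Proof. by case=> [[]]. Qed.

Lemma Wset_eq r I : Wset G (cls G rel r) I ->
  exists s, allP (cls G rel r) s /\ I = prodI G s.
Proof. by move=> [s [hs he]]; exists s; split=> //; apply: pred_ext. Qed.

Lemma Wset_ideal r I : Wset G (cls G rel r) I -> ideal2 G I.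
Proof.
move/Wset_eq=> [s [hs ->]]; apply: prodI_ideal => //.
by apply: allP_mono hs; apply: cls_ideal.
Qed.

Lemma Wset_G (Bc : (A -> Prop) -> Prop) : Wset G Bc G.
Proof. by exists [::]. Qed.

Lemma Wset_prod r I1 I2 : Wset G (cls G rel r) I1 -> Wset G (cls G rel r) I2 ->
  exists I, [/\ Wset G (cls G rel r) I, incl I I1 & incl I I2].
Proof.
move=> /Wset_eq [s [hs ->]] /Wset_eq [t [ht ->]].
have hs' := allP_mono (@cls_ideal r) hs; have ht' := allP_mono (@cls_ideal r) ht.
exists (prodI G (s ++ t)); split.
- by exists (s ++ t); split=> //; apply: allP_cat.
- exact: prodI_catL.
- exact: prodI_catR.
Qed.

Lemma cls_eq r r' : cfs G r -> cfs G r' -> rel r r' -> cls G rel r = cls G rel r'.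
Proof.
case: HE => hrefl hsym htr hr hr' hrr'; apply: pred_ext => m; split.
- by move=> [hm hmr]; split=> //; apply: (htr m r r').
- move=> [hm hmr]; split=> //; apply: (htr m r' r) => //; exact: hsym.
Qed.

Lemma part_cls (M : zmodType) (act : A -> M -> M) (N : M -> Prop) r r' v :
  cfs G r -> cfs G r' -> rel r r' -> part act N G rel r v -> part act N G rel r' v.
Proof. by move=> hr hr' hrr'; rewrite /part (cls_eq hr hr' hrr'). Qed.

Section PartV.
Variable V : lmodType A.
Notation partV := (part (@modact _ _ V) (@is0 _ _ V) G rel).

Lemma partV0 r : partV r 0.
Proof. by exists G; split; [apply: Wset_G|move=> x _; rewrite /is0 /modact scaler0]. Qed.

Lemma partVD r v w : partV r v -> partV r w -> partV r (v + w).
Proof.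
move=> [I1 [h1 k1]] [I2 [h2 k2]].
have [I [hI s1 s2]] := Wset_prod h1 h2.
exists I; split=> // x hx; rewrite /is0 /modact scalerDr.
have := k1 x (s1 _ hx); have := k2 x (s2 _ hx); rewrite /is0 /modact => -> ->.
by rewrite addr0.
Qed.

Lemma partVM r g v : G g -> partV r v -> partV r (g *: v).
Proof.
move=> hg [I [hI kI]]; exists I; split=> // x hx.
rewrite /is0 /modact scalerA; apply: kI.
by have [_ hr] := Wset_ideal hI; apply: (ri_mul hr).
Qed.

Lemma partV_sum (T : Type) r (s : seq T) (F : T -> V) :
  (forall i, partV r (F i)) -> partV r (\sum_(i <- s) F i).
Proof.
move=> h; elim: s => [|i s IH]; first by rewrite big_nil; apply: partV0.
by rewrite big_cons; apply: partVD.
Qed.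

End PartV.
End Parts.

Fixpoint allL (T : Type) (P : T -> Prop) (s : seq T) : Prop :=
  if s is x :: s' then P x /\ allL P s' else True.

Lemma allL_cat (T : Type) (P : T -> Prop) s t : allL P (s ++ t) <-> allL P s /\ allL P t.
Proof. elim: s => [|x s IH] /=; first by intuition. by rewrite IH; intuition. Qed.

Lemma allL_nth (T : Type) (P : T -> Prop) s d i : allL P s -> (i < size s)%N -> P (nth d s i).
Proof.
elim: s i => [|x s IH] [|i] //=; first by case.
by move=> [_ h] hi; apply: IH.
Qed.

Lemma allL_map (T U : Type) (P : T -> Prop) (Q : U -> Prop) (f : T -> U) s :
  (forall x, P x -> Q (f x)) -> allL P s -> allL Q (map f s).
Proof. by move=> h; elim: s => //= x s IH [h1 h2]; split; [apply: h|apply: IH]. Qed.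

Lemma take_nth_decomp (T : Type) (s : seq T) d i j : (i < j)%N -> (j < size s)%N ->
  s = take i s ++ nth d s i :: take (j - i.+1) (drop i.+1 s) ++
      nth d s j :: drop (j - i.+1).+1 (drop i.+1 s).
Proof.
move=> hij hj.
have hi : (i < size s)%N by apply: ltn_trans hj.
rewrite -{1}(cat_take_drop i s); congr (_ ++ _).
rewrite (drop_nth d hi); congr (_ :: _).
set D := drop i.+1 s.
have hm : (j - i.+1 < size D)%N by rewrite size_drop; lia.
rewrite -{1}(cat_take_drop (j - i.+1) D); congr (_ ++ _).
rewrite (drop_nth d hm) nth_drop subnKC //.
Qed.

Section Sep.
Variables (k : fieldType) (A : algType k) (G : A -> Prop)
  (rel : (A -> Prop) -> (A -> Prop) -> Prop).
Hypothesis HG : is_subalg G.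
Hypothesis HE : equiv_on_cfs G rel.
Variable V : lmodType A.
Hypothesis HV : HC_block_mod G rel V.
Notation partV := (part (@modact _ _ V) (@is0 _ _ V) G rel).

Definition goodE (p : (A -> Prop) * V) := cfs G p.1 /\ partV p.1 p.2.

Lemma rel_sym r r' : cfs G r -> cfs G r' -> rel r r' -> rel r' r.
Proof. by case: HE => _ h _; apply: h. Qed.
Lemma rel_tr r r' r'' : cfs G r -> cfs G r' -> cfs G r'' -> rel r r' -> rel r' r'' -> rel r r''.
Proof. by case: HE => _ _ h; apply: h. Qed.
Lemma rel_refl r : cfs G r -> rel r r.
Proof. by case: HE => h _ _; apply: h. Qed.

Lemma Sep L : allL goodE L -> \sum_(p <- L) p.2 = 0 ->
  forall r', cfs G r' -> \sum_(p <- L | asb (rel p.1 r')) p.2 = 0.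
Proof.
move: {2}(size L) (leqnn (size L)) => n; elim: n L => [|n IH] L.
  by rewrite leqn0 => /nilP -> _ _ r' _; rewrite big_nil.
move=> hsz hL hsum r' hr'.
case: (Classical_Prop.classic (exists L1 x L2 y L3,
   L = L1 ++ x :: L2 ++ y :: L3 /\ rel x.1 y.1)).
- move=> [L1 [x [L2 [y [L3 [hLe hxy]]]]]].
  move: hL hsz hsum; rewrite hLe.
  move=> /allL_cat [h1 /= [[hx1 hx2] /allL_cat [h2 /= [[hy1 hy2] h3]]]] hsz hsum.
  have hxy' : rel y.1 x.1 by apply: rel_sym.
  have hyr : asb (rel y.1 r') = asb (rel x.1 r').
    case: (asbP (rel x.1 r')) => h.
      by apply: asbT; apply: (rel_tr hy1 hx1 hr').
    by apply: asbF => h'; apply: h; apply: (rel_tr hx1 hy1 hr').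
  pose L' := L1 ++ (x.1, x.2 + y.2) :: L2 ++ L3.
  have hsz' : (size L' <= n)%N.
    move: hsz; rewrite /L'; rewrite !size_cat /= !size_cat /=; lia.
  have hL' : allL goodE L'.
    rewrite /L'.
    apply/allL_cat; split=> //=; split; last by apply/allL_cat.
    split=> //; apply: partVD => //; exact: (part_cls HE hy1 hx1 hxy' hy2).
  have hsum' : \sum_(p <- L') p.2 = 0.
    move: hsum; rewrite /L'; rewrite !big_cat !big_cons /= !big_cat !big_cons /=.
    move=> h; apply: etrans h; congr (_ + _); rewrite -addrA; congr (_ + _).
    by rewrite addrCA.
  have := IH _ hsz' hL' hsum' r' hr'.
  rewrite /L' !big_cat !big_cons /= !big_cat !big_cons /= hyr.
  case: (asb (rel x.1 r')) => //.
  move=> h; apply: etrans h; congr (_ + _); rewrite -addrA; congr (_ + _).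
  by rewrite addrCA.
- move=> hnd.
  pose d : (A -> Prop) * V := (fun _ => False, 0).
  have hw : forall i : 'I_(size L), (nth d L i).2 = 0.
    case: HV => _ huniq; apply: (huniq _ (fun i => (nth d L i).1) (fun i => (nth d L i).2)).
    + by move=> i; case: (allL_nth d hL (ltn_ord i)).
    + move=> i j hij hrel.
      have hc : forall i : 'I_(size L), cfs G (nth d L i).1.
        by move=> i'; case: (allL_nth d hL (ltn_ord i')).
      have gen : forall i j : 'I_(size L), (i < j)%N -> ~ rel (nth d L i).1 (nth d L j).1.
        move=> i' j' hlt hr; apply: hnd.
        exists (take i' L), (nth d L i'), (take (j' - i'.+1) (drop i'.+1 L)), (nth d L j'),
          (drop (j' - i'.+1).+1 (drop i'.+1 L)); split=> //.
        exact: take_nth_decomp.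
      case: (ltngtP i j) => h.
      * exact: (gen i j h).
      * by apply: (gen j i h); apply: rel_sym.
      * by move/eqP: hij; apply; apply: val_inj.
    + by move=> i; case: (allL_nth d hL (ltn_ord i)).
    + by rewrite /is0; apply: etrans hsum; rewrite [RHS](big_nth d) big_mkord.
  rewrite (big_nth d) big_mkord; apply: big1 => i _; exact: hw.
Qed.

Lemma allL_all (T : Type) (P : T -> Prop) s : (forall x, P x) -> allL P s.
Proof. by move=> h; elim: s => //= x s ->; split. Qed.

Lemma dec_ex v : exists L, allL goodE L /\ \sum_(p <- L) p.2 = v.
Proof.
case: HV => hex _; have [n [r [w [hr _ hw hv]]]] := hex v.
exists [seq (r i, w i) | i <- index_enum 'I_n]; split.
  apply: (allL_map (P := fun i => goodE (r i, w i)) (f := fun i => (r i, w i))) => //.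
  by apply: allL_all => i; rewrite /goodE; split; [exact: hr|exact: hw].
rewrite (big_map (fun i : 'I_n => (r i, w i)) xpredT (fun p => p.2)) /=; apply/esym/subr0_eq; exact: hv.
Qed.

Definition decL v : seq ((A -> Prop) * V) :=
  proj1_sig (ClassicalEpsilon.constructive_indefinite_description _ (dec_ex v)).
Lemma decL_good v : allL goodE (decL v).
Proof. by rewrite /decL; case: ClassicalEpsilon.constructive_indefinite_description => L [] /=. Qed.
Lemma decL_sum v : \sum_(p <- decL v) p.2 = v.
Proof. by rewrite /decL; case: ClassicalEpsilon.constructive_indefinite_description => L [] /=. Qed.

Variable r0 : A -> Prop.
Hypothesis Hr0 : cfs G r0.

Definition pB v := \sum_(p <- decL v | asb (rel p.1 r0)) p.2.

Lemma partVN r v : partV r v -> partV r (- v).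
Proof. by move=> h; rewrite -scaleN1r; apply: (partVM HG) => //; apply: (GN HG); apply: (G1 HG). Qed.

Lemma pB_spec L v : allL goodE L -> \sum_(p <- L) p.2 = v ->
  pB v = \sum_(p <- L | asb (rel p.1 r0)) p.2.
Proof.
move=> hL hv.
have hg : allL goodE (L ++ [seq (p.1, - p.2) | p <- decL v]).
  apply/allL_cat; split=> //; apply: allL_map (decL_good v).
  by move=> [r w] [h1 h2]; split => //; apply: partVN.
have hs : \sum_(p <- L ++ [seq (p.1, - p.2) | p <- decL v]) p.2 = 0.
  by rewrite big_cat big_map /= hv sumrN decL_sum subrr.
have := Sep hg hs Hr0; rewrite big_cat big_map /= sumrN.
by move=> h; apply/esym/subr0_eq.
Qed.

Lemma pB_add v w : pB (v + w) = pB v + pB w.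
Proof.
rewrite (@pB_spec (decL v ++ decL w)).
- by rewrite big_cat.
- by apply/allL_cat; split; apply: decL_good.
- by rewrite big_cat !decL_sum.
Qed.

Lemma pB_scale g v : G g -> pB (g *: v) = g *: pB v.
Proof.
move=> hg; rewrite (@pB_spec [seq (p.1, g *: p.2) | p <- decL v]).
- by rewrite big_map scaler_sumr.
- apply: allL_map (decL_good v).
  by move=> [r w] [h1 h2]; split => //; apply: (partVM HG).
- by rewrite big_map -scaler_sumr decL_sum.
Qed.

Lemma pB_part v : partV r0 v -> pB v = v.
Proof.
move=> hv; rewrite (@pB_spec [:: (r0, v)]) //=.
- by rewrite big_cons big_nil (asbT (rel_refl Hr0)) addr0.
- by rewrite big_seq1.
Qed.

Lemma pB_other r v : cfs G r -> ~ rel r r0 -> partV r v -> pB v = 0.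
Proof.
move=> hr hnr hv; rewrite (@pB_spec [:: (r, v)]) //=.
- by rewrite big_cons big_nil (asbF hnr).
- by rewrite big_seq1.
Qed.

Lemma pB0 : pB 0 = 0.
Proof. have h := pB_add 0 0; rewrite addr0 in h; by apply: (addrI (pB 0)); rewrite addr0 -h. Qed.

Lemma pB_sum (T : Type) (s : seq T) (F : T -> V) : pB (\sum_(i <- s) F i) = \sum_(i <- s) pB (F i).
Proof.
elim: s => [|i s IH]; first by rewrite !big_nil pB0.
by rewrite !big_cons pB_add IH.
Qed.

Lemma pB_in v : partV r0 (pB v).
Proof.
rewrite /pB; elim: (decL v) (decL_good v) => [|[r w] L IH] /=.
  by rewrite big_nil; move=> _; apply: partV0.
move=> [[hr hw] hL]; rewrite big_cons /=.
case: (asbP (rel r r0)) => h; last by apply: IH.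
by apply: (partVD HG); [apply: (part_cls HE hr Hr0 h hw)|apply: IH].
Qed.

End Sep.

Section Noeth.
Variables (k : fieldType) (A : algType k) (G : A -> Prop).
Hypothesis HG : is_subalg G.
Hypothesis HN : noetherian G.
Implicit Types (I J m : A -> Prop).

Definition RGen (s : seq A) : A -> Prop := fun z =>
  exists g : 'I_(size s) -> A, (forall i, G (g i)) /\ z = \sum_(i < size s) nth 0 s i * g i.

Lemma G_sum (T : Type) (r : seq T) (F : T -> A) : (forall i, G (F i)) -> G (\sum_(i <- r) F i).
Proof.
move=> h; elim: r => [|i r IH]; first by rewrite big_nil; apply: (G0 HG).
by rewrite big_cons; apply: (GD HG).
Qed.

Lemma RGen_right s : (forall x, x \in s -> G x) -> right_ideal G (RGen s).
Proof.
move=> hs; split.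
- move=> z [g [hg ->]]; apply: G_sum => i; apply: (GM HG) => //.
  by apply/hs/mem_nth.
- split.
  + by exists (fun=> 0); split=> [i|]; [apply: (G0 HG)|rewrite big1 // => i _; rewrite mulr0].
  + move=> x y [g [hg ->]] [g' [hg' ->]]; exists (fun i => g i + g' i); split.
      by move=> i; apply: (GD HG).
    by rewrite -big_split; apply: eq_bigr => i _; rewrite mulrDr.
  + move=> x [g [hg ->]]; exists (fun i => - g i); split.
      by move=> i; apply: (GN HG).
    by rewrite -sumrN; apply: eq_bigr => i _; rewrite mulrN.
- move=> h x hh [g [hg ->]]; exists (fun i => g i * h); split.
    by move=> i; apply: (GM HG).
  by rewrite mulr_suml; apply: eq_bigr => i _; rewrite mulrA.
Qed.

Lemma RGen_cons a s z : RGen s z -> RGen (a :: s) z.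
Proof.
move=> [g [hg ->]]; exists (fun i => if unlift ord0 i is Some j then g j else 0); split.
  by move=> i; case: unlift => [j|]; [apply: hg|apply: (G0 HG)].
rewrite big_ord_recl unlift_none mulr0 add0r; apply: eq_bigr => i _.
by rewrite liftK.
Qed.

Lemma RGen_head a s : RGen (a :: s) a.
Proof.
exists (fun i => if unlift ord0 i is Some j then 0 else 1); split.
  by move=> i; case: unlift => [j|]; [apply: (G0 HG)|apply: (G1 HG)].
rewrite big_ord_recl unlift_none mulr1 big1 ?addr0 // => i _.
by rewrite liftK mulr0.
Qed.

Lemma fg_right I : right_ideal G I ->
  exists s, (forall x, x \in s -> I x) /\ incl I (RGen s).
Proof.
move=> hI; apply: Classical_Prop.NNPP => hno.
have hex : forall s, exists z, (forall x, x \in s -> I x) -> I z /\ ~ RGen s z.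
  move=> s; case: (Classical_Prop.classic (forall x, x \in s -> I x)) => hs.
  + case: (Classical_Prop.classic (exists z, I z /\ ~ RGen s z)) => [[z hz]|hz].
      by exists z.
    exfalso; apply: hno; exists s; split=> // z hz'.
    by apply: Classical_Prop.NNPP => hz''; apply: hz; exists z.
  + by exists 0.
pose nxt s := proj1_sig (ClassicalEpsilon.constructive_indefinite_description _ (hex s)).
have hnxt s : (forall x, x \in s -> I x) -> I (nxt s) /\ ~ RGen s (nxt s).
  by rewrite /nxt; case: ClassicalEpsilon.constructive_indefinite_description.
pose fix S n := if n is n'.+1 then nxt (S n') :: S n' else [::].
have hS n : forall x, x \in S n -> I x.
  elim: n => [|n IH] x //=; rewrite inE => /orP[/eqP ->|/IH //].
  by case: (hnxt _ IH).
have hIG := ri_sub hI.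
case: HN => _ /(_ (fun n => RGen (S n))) [].
- by move=> n; apply: RGen_right => x /hS /hIG.
- by move=> n z /= hz; apply: RGen_cons.
move=> n0 hn0.
have [_ hnot] := hnxt _ (hS n0); apply: hnot.
by apply: (hn0 n0.+1); apply: RGen_head.
Qed.

Lemma fin_codim_T I (T : finType) (e : T -> A) : (forall t, G (e t)) ->
  (forall x, G x -> exists c : T -> k, I (x - \sum_t c t *: e t)) -> fin_codim G I.
Proof.
move=> he hx; exists #|T|, (fun i => e (enum_val i)); split=> // x /hx [c hc].
exists (fun i => c (enum_val i)); move: hc.
by rewrite (big_enum_val (A := T) (fun t => c t *: e t)).
Qed.


Lemma fin_codim_mul m X : ideal2 G m -> fin_codim G m -> ideal2 G X -> fin_codim G X ->
  fin_codim G (idealMul m X).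
Proof.
move=> hm [n1 [e1 [he1 hc1]]] hX [n2 [e2 [he2 hc2]]].
have [s [hsm hmR]] := fg_right (proj2 hm).
have hmG := li_sub (proj1 hm).
pose e (t : ('I_n1 + ('I_(size s) * 'I_n2))%type) := match t with inl i => e1 i | inr (p, j) => nth 0 s p * e2 j end.
apply: (fin_codim_T (e := e)).
  case=> [i|[p j]] //=; apply: (GM HG) => //; apply/hmG/hsm/mem_nth/ltn_ord.
move=> x hx; have [c1 hz] := hc1 x hx.
have [g [hg hzg]] := hmR _ hz.
have : forall p : 'I_(size s), exists c2 : 'I_n2 -> k, X (g p - \sum_j c2 j *: e2 j).
  by move=> p; apply: hc2.
case/fin_all_exists => c2 hc2'.
exists (fun t => match t with inl i => c1 i | inr (p, j) => c2 p j end).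
rewrite big_sumType /=.
have -> : \sum_(i : 'I_(size s) * 'I_n2) (let (p, j) := i in c2 p j) *: (let (p, j) := i in nth 0 s p * e2 j)
   = \sum_(p < size s) nth 0 s p * \sum_(j < n2) c2 p j *: e2 j.
  have -> : \sum_(p < size s) nth 0 s p * \sum_(j < n2) c2 p j *: e2 j =
     \sum_(p < size s) \sum_(j < n2) c2 p j *: (nth 0 s p * e2 j).
    by apply: eq_bigr => p _; rewrite mulr_sumr; apply: eq_bigr => j _; rewrite scalerAr.
  by rewrite pair_bigA; apply: eq_bigr => [[p j]] _.
rewrite opprD addrA hzg.
rewrite -sumrB; have ha : is_addsub (idealMul m X) by case: (idealMul_ideal2 hm hX) => [[]].
apply: (add_sum ha (P := idealMul m X)) => //.
apply: sumsL_big => p; apply: sumsL1; rewrite -mulrBr.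
by apply: idealMul_in; [apply/hsm/mem_nth/ltn_ord|apply: hc2'].
Qed.

Lemma fin_codim_prodI s : allP (cfs G) s -> fin_codim G (prodI G s).
Proof.
elim: s => [|m s IH] /=.
  move=> _; exists 0%N, (fun i => 0); split=> [[]//|x hx]; exists (fun=> 0).
  by rewrite big_ord0 subr0.
move=> [hm hs]; apply: fin_codim_mul.
- by case: hm.
- by case: hm.
- by apply: prodI_ideal => //; apply: allP_mono hs => m' [].
- exact: IH.
Qed.

End Noeth.

Section Qspan.
Variables (k : fieldType) (A : algType k) (G : A -> Prop) (Bc : (A -> Prop) -> Prop).
Hypothesis HG : is_subalg G.
Variables (Is J : A -> Prop).
Hypothesis hIs : Wset G Bc Is.
Hypothesis hJ : Wset G Bc J.
Hypothesis hIsf : fin_codim G Is.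
Hypothesis hIsi : ideal2 G Is.

Lemma rightGen_add x y : rightGen Is x -> rightGen Is y -> rightGen Is (x + y).
Proof. by move=> /rightGenE hx /rightGenE hy; apply/rightGenE/sumsLD. Qed.

Lemma Qspan_ex : ABB_fg_left G Bc -> exists nq (q : 'I_nq -> A), forall a,
  exists (mu : 'I_nq -> k) x y, [/\ rightGen Is x, leftGen J y &
     a = \sum_(i < nq) mu i *: q i + x + y].
Proof.
move=> [r [E [hE hfg]]].
have [ne [e [he hce]]] := hIsf.
pose q' (t : ('I_r * 'I_ne)%type) := e t.2 * E t.1 Is J.
exists #|{: 'I_r * 'I_ne}|, (fun i => q' (enum_val i)) => a.
have hF : ABB_el G Bc (fun _ _ => a).
  move=> n m n' m' _ _ _ _ _ _; rewrite subrr; exists 0, 0; split; [|split; [|by rewrite addr0]].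
    by exists 0%N, (fun _ => 0), (fun _ => 0); split=> [[]//|]; rewrite big_ord0.
  by exists 0%N, (fun _ => 0), (fun _ => 0); split=> [[]//|]; rewrite big_ord0.
have [c [hc heq]] := hfg _ hF.
have [u [w [hu [hw huw]]]] := heq Is J hIs hJ.
have : forall i : 'I_r, exists mu : 'I_ne -> k, Is (c i Is - \sum_j mu j *: e j).
  by move=> i; apply: hce; case: (hc i) => h _; apply: h.
case/fin_all_exists => mu hmu.
exists (fun i => mu (enum_val i).1 (enum_val i).2).
exists (\sum_i (c i Is - \sum_j mu i j *: e j) * E i Is J + u), w; split=> //.
- apply: rightGen_add => //; apply/rightGenE; apply: sumsL_big => i; apply: sumsL1.
  by exists (E i Is J), (c i Is - \sum_j mu i j *: e j).
- rewrite -(big_enum_val (A := {: 'I_r * 'I_ne}) (fun t => mu t.1 t.2 *: q' t)).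
  have -> : \sum_(t in {: 'I_r * 'I_ne}) mu t.1 t.2 *: q' t =
            \sum_i \sum_j mu i j *: (e j * E i Is J).
    by rewrite pair_bigA; apply: eq_bigr => [[i j]] _.
  rewrite addrA -big_split /=.
  have -> : \sum_i (\sum_j mu i j *: (e j * E i Is J) + (c i Is - \sum_j mu i j *: e j) * E i Is J)
     = \sum_i c i Is * E i Is J.
    apply: eq_bigr => i _; rewrite mulrBl addrCA mulr_suml.
    have -> : \sum_j mu i j *: e j * E i Is J = \sum_j mu i j *: (e j * E i Is J).
      by apply: eq_bigr => j _; rewrite scalerAl.
    by rewrite subrr addr0.
  by rewrite -addrA -huw addrCA subrr addr0.
Qed.
End Qspan.

Section Simple.
Variables (k : fieldType) (A : algType k).

Lemma simple_gen (V : lmodType A) (u : V) : simple_mod V -> u != 0 ->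
  forall v : V, exists a : A, v = a *: u.
Proof.
move=> [_ hs] hu v.
have hU : submod (fun w : V => exists a : A, w = a *: u).
  split.
  - by exists 0; rewrite scale0r.
  - by move=> x y [a ->] [b ->]; exists (a + b); rewrite scalerDl.
  - by move=> b x [a ->]; exists (b * a); rewrite scalerA.
case: (hs _ hU) => [h|h]; last exact: h.
by move: hu; rewrite (h u) ?eqxx //; exists 1; rewrite scale1r.
Qed.

Lemma alg_mul (c d : k) : c%:A * d%:A = (c * d)%:A :> A.
Proof. by rewrite mulr_algl scalerA. Qed.

Lemma alg_scale0 (V : lmodType A) (c : k) (u : V) : c != 0 -> c%:A *: u = 0 -> u = 0.
Proof.
move=> hc h; have := congr1 (fun w => (c^-1)%:A *: w) h.
by rewrite /= scalerA alg_mul mulVf // !scale1r scaler0.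
Qed.

Lemma mod_iso_sym (V W : lmodType A) : mod_iso V W -> mod_iso W V.
Proof.
move=> [f [fD fZ [g fg gf]]]; exists g; split.
- by move=> u v; apply: (can_inj fg); rewrite fD !gf.
- by move=> a v; apply: (can_inj fg); rewrite fZ !gf.
- by exists f.
Qed.

Lemma schur (V W : lmodType A) (f : V -> W) : simple_mod V -> simple_mod W ->
  (forall u v, f (u + v) = f u + f v) -> (forall (a : A) v, f (a *: v) = a *: f v) ->
  (exists v, f v != 0) -> mod_iso V W.
Proof.
move=> [_ hV] [_ hW] fD fZ [v0 hv0].
have f0 : f 0 = 0 by have := fD 0 0; rewrite addr0 => h; apply: (addrI (f 0)); rewrite addr0 -h.
have fN : forall v, f (- v) = - f v.
  by move=> v; apply: (addrI (f v)); rewrite -fD !subrr f0.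
have hinj : injective f.
  have hK : submod (fun v : V => f v = 0).
    split=> //; first by move=> x y hx hy; rewrite fD hx hy addr0.
    by move=> a x hx; rewrite fZ hx scaler0.
  case: (hV _ hK) => [h|h]; last by move: hv0; rewrite h eqxx.
  move=> x y hxy; apply/eqP; rewrite -subr_eq0; apply/eqP; apply: h.
  by rewrite fD fN hxy subrr.
have hsurj : forall w, exists v, f v = w.
  have hI : submod (fun w : W => exists v, w = f v).
    split; first by exists 0.
    - by move=> x y [a ->] [b ->]; exists (a + b); rewrite fD.
    - by move=> a x [b ->]; exists (a *: b); rewrite fZ.
  case: (hW _ hI) => [h|h]; first by move: hv0; rewrite -(h (f v0)) ?eqxx //; exists v0.
  by move=> w; have [v ->] := h w; exists v.
pose g w := proj1_sig (ClassicalEpsilon.constructive_indefinite_description _ (hsurj w)).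
have gK : cancel g f.
  by move=> w; rewrite /g; case: ClassicalEpsilon.constructive_indefinite_description.
exists f; split=> //; exists g => //.
by move=> v; apply: hinj; rewrite gK.
Qed.

End Simple.

Section Density.
Variables (k : fieldType) (A : algType k) (t : nat) (Vs : 'I_t -> lmodType A)
  (us : forall j, Vs j).
Hypothesis hs : forall j, simple_mod (Vs j).
Hypothesis hnz : forall j, us j != 0.
Hypothesis hni : forall i j, i != j -> ~ mod_iso (Vs i) (Vs j).

Lemma density_set n : forall S : {set 'I_t}, (#|S| <= n)%N -> forall l, l \in S ->
  exists a : A, a *: us l = us l /\ forall j, j \in S -> j != l -> a *: us j = 0.
Proof.
elim: n => [|n IH] S hS l hl.
  by move: hS; rewrite leqn0 => /eqP/cards0_eq hS0; move: hl; rewrite hS0 inE.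
pose S' := S :\ l.
have hS' : (#|S'| <= n)%N.
  by move: hS; rewrite /S' (cardsD1 l S) hl add1n ltnS.
have : forall j, exists a : A, j \in S' ->
    a *: us j = us j /\ forall i, i \in S' -> i != j -> a *: us i = 0.
  move=> j; case: (boolP (j \in S')) => hj.
    by have [a ha] := IH S' hS' j hj; exists a.
  by exists 0.
case/fin_all_exists => aa haa.
pose K (a : A) := forall j, j \in S' -> a *: us j = 0.
have hU : submod (fun w : Vs l => exists a, K a /\ w = a *: us l).
  split.
  - by exists 0; split; [move=> j _; rewrite scale0r|rewrite scale0r].
  - move=> x y [a [ha ->]] [b [hb ->]]; exists (a + b); split; last by rewrite scalerDl.
    by move=> j hj; rewrite scalerDl ha // hb // addr0.
  - move=> b x [a [ha ->]]; exists (b * a); split; last by rewrite scalerA.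
    by move=> j hj; rewrite -scalerA ha // scaler0.
case: (hs l) => _ hsl.
case: (hsl _ hU) => [hzero|hall]; last first.
  have [a [ha hal]] := hall (us l); exists a; split; first by rewrite -hal.
  by move=> j hj hjl; apply: ha; rewrite /S' !inE hjl hj.
exfalso.
have hK0 : forall a, K a -> a *: us l = 0 by move=> a ha; apply: hzero; exists a.
have hal0 : forall j, j \in S' -> aa j *: us l = 0.
  move=> j hj; apply: Classical_Prop.NNPP => hne.
  have hjl : j != l by move: hj; rewrite /S' !inE => /andP[].
  apply: (hni hjl).
  have hgen := simple_gen (hs j) (hnz j).
  pose cf (x : Vs j) := proj1_sig (ClassicalEpsilon.constructive_indefinite_description _ (hgen x)).
  have hcf : forall x, x = cf x *: us j.
    by move=> x; rewrite /cf; case: ClassicalEpsilon.constructive_indefinite_description.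
  have wd : forall c c', c *: us j = c' *: us j -> c *: (aa j *: us l) = c' *: (aa j *: us l).
    move=> c c' hc; apply/eqP; rewrite -subr_eq0 -scalerBl scalerA; apply/eqP; apply: hK0.
    move=> i hi; rewrite -scalerA; case: (eqVneq i j) => [->|hij].
      by case: (haa j hj) => -> _; rewrite scalerBl hc subrr.
    by case: (haa j hj) => _ h'; rewrite h' ?scaler0.
  apply: (@schur _ _ _ _ (fun x => cf x *: (aa j *: us l))) => //.
  - move=> x y /=; rewrite -scalerDl; apply: wd.
    by rewrite scalerDl -!hcf.
  - move=> b x /=; rewrite [RHS]scalerA; apply: wd.
    by rewrite -scalerA -!hcf.
  - exists (us j) => /=.
    have -> : cf (us j) *: (aa j *: us l) = 1 *: (aa j *: us l).
      by apply: wd; rewrite scale1r -hcf.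
    by rewrite scale1r; apply/eqP.
have hb : K (1 - \sum_(j in S') aa j).
  move=> i hi; rewrite scalerBl scale1r scaler_suml (bigD1 i) //=.
  case: (haa i hi) => -> h; rewrite big1 ?addr0 ?subrr // => j /andP[hj hji].
  by case: (haa j hj) => _ h'; apply: h' => //; rewrite eq_sym.
have := hK0 _ hb; rewrite scalerBl scale1r scaler_suml big1 ?subr0.
  by move/eqP; rewrite (negbTE (hnz l)).
by move=> j hj; apply: hal0.
Qed.

Lemma density l : exists a : A, a *: us l = us l /\ forall j, j != l -> a *: us j = 0.
Proof.
have [a [h1 h2]] := @density_set #|[set: 'I_t]| [set: 'I_t] (leqnn _) l (in_setT l).
by exists a; split=> // j; apply: h2; rewrite in_setT.
Qed.
End Density.

Lemma dependence (k : fieldType) (t nq : nat) (mu : 'I_t -> 'I_nq -> k) : (nq < t)%N ->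
  exists lam : 'I_t -> k, (exists l, lam l != 0) /\
    forall i, \sum_(l < t) lam l * mu l i = 0.
Proof.
move=> hlt.
pose M : 'M[k]_(t, nq) := \matrix_(l, i) mu l i.
have hK : kermx M != 0.
  rewrite -mxrank_eq0 mxrank_ker subn_eq0 -ltnNge.
  by apply: leq_ltn_trans (rank_leq_col M) hlt.
have [l1 hl1] : exists l1, row l1 (kermx M) != 0.
  apply: Classical_Prop.NNPP => hno; move/eqP: hK; apply; apply/row_matrixP => l.
  rewrite row0; apply/eqP; apply: Classical_Prop.NNPP => h; apply: hno; by exists l; apply/negP.
pose x := row l1 (kermx M).
have hx : x *m M = 0 by rewrite /x -row_mul mulmx_ker row0.
exists (fun l => x 0 l); split.
  apply: Classical_Prop.NNPP => hno; move/eqP: hl1; apply; apply/matrixP => i j.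
  rewrite (ord1 i) [RHS]mxE; apply/eqP; apply: Classical_Prop.NNPP => h; apply: hno.
  by exists j; rewrite /x; apply/negP.
move=> i; have := congr1 (fun m : 'M[k]_(1, nq) => m 0 i) hx; rewrite /= !mxE => h.
transitivity (\sum_j x 0 j * M j i); last exact: h.
by apply: eq_bigr => l _; rewrite /M mxE.
Qed.

Section ModMain.
Variables (k : fieldType) (A : algType k) (G : A -> Prop)
  (rel : (A -> Prop) -> (A -> Prop) -> Prop) (r0 : A -> Prop).
Hypothesis HG : is_subalg G.
Hypothesis HE : equiv_on_cfs G rel.
Hypothesis Hr0 : cfs G r0.
Variables (J Is : A -> Prop).
Hypothesis hJ : Wset G (cls G rel r0) J.
Hypothesis hIsi : ideal2 G Is.
Notation partM := (part (fun x (a : A) => x * a) (leftGen J) G rel).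
Hypothesis hIsk : forall a : A, partM r0 a -> forall x, Is x -> leftGen J (x * a).
Hypothesis hdecM : forall a : A, exists n (r : 'I_n -> A -> Prop) (w : 'I_n -> A),
  [/\ (forall i, cfs G (r i)), (forall i j, i != j -> ~ rel (r i) (r j)),
      (forall i, partM (r i) (w i)) & leftGen J (a - \sum_(i < n) w i)].
Variables (nq : nat) (q : 'I_nq -> A).

Section OneV.
Variable V : lmodType A.
Hypothesis HV : HC_block_mod G rel V.
Hypothesis HVs : simple_mod V.
Variable u : V.
Hypothesis hu : u != 0.
Hypothesis huJ : forall x, J x -> x *: u = 0.
Notation partV := (part (@modact _ _ V) (@is0 _ _ V) G rel).
Notation P := (pB HV r0).

Lemma leftGen_kill y : leftGen J y -> y *: u = 0.
Proof.
move=> [n [a [x [hx ->]]]]; rewrite scaler_suml big1 // => i _.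
by rewrite -scalerA huJ // scaler0.
Qed.

Lemma u_part : partV r0 u.
Proof. by exists J; split=> // x hx; apply: huJ. Qed.

Lemma Is_kills v : partV r0 v -> forall x, Is x -> x *: v = 0.
Proof.
move=> hv x hx; rewrite -(pB_part HG HE HV Hr0 hv).
have [a ->] := simple_gen HVs hu v.
have [n [r [w [hr _ hw hJw]]]] := hdecM a.
have hau : a *: u = \sum_(i < n) (w i *: u).
  apply/eqP; rewrite -subr_eq0 -scaler_suml -scalerBl; apply/eqP.
  exact: leftGen_kill.
have hpart : forall i, partV (r i) (w i *: u).
  move=> i; have [I [hI kI]] := hw i; exists I; split=> // y hy.
  by rewrite /is0 /modact scalerA; apply: leftGen_kill; apply: kI.
rewrite hau (pB_sum HG HE HV Hr0) scaler_sumr big1 // => i _.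
case: (Classical_Prop.classic (rel (r i) r0)) => hrel.
- have hwi : partM r0 (w i) := part_cls HE (hr i) Hr0 hrel (hw i).
  rewrite (pB_part HG HE HV Hr0 (part_cls HE (hr i) Hr0 hrel (hpart i))).
  by rewrite scalerA; apply: leftGen_kill; apply: hIsk.
- by rewrite (pB_other HG HE HV Hr0 (hr i) hrel (hpart i)) scaler0.
Qed.

Lemma rightGen_pB x (v : V) : rightGen Is x -> P (x *: v) = 0.
Proof.
move=> [n [a [y [hy ->]]]]; rewrite scaler_suml (pB_sum HG HE HV Hr0) big1 // => i _.
rewrite -scalerA (pB_scale HG HE HV Hr0 _ (li_sub (proj1 hIsi) (hy i))).
exact: (Is_kills (pB_in HG HE HV Hr0 _) (hy i)).
Qed.

Lemma pB_expand a (mu : 'I_nq -> k) x y : rightGen Is x -> leftGen J y ->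
  a = \sum_(i < nq) mu i *: q i + x + y ->
  P (a *: u) = \sum_(i < nq) (mu i)%:A *: P (q i *: u).
Proof.
move=> hx hy ->; rewrite !scalerDl (leftGen_kill hy) addr0 !(pB_add HG HE HV Hr0) (rightGen_pB _ hx) addr0.
rewrite scaler_suml (pB_sum HG HE HV Hr0); apply: eq_bigr => i _.
by rewrite -[mu i *: q i]mulr_algl -scalerA (pB_scale HG HE HV Hr0 _ (Galg HG (mu i))).
Qed.

End OneV.

Hypothesis hQ : forall a, exists (mu : 'I_nq -> k) x y, [/\ rightGen Is x, leftGen J y &
     a = \sum_(i < nq) mu i *: q i + x + y].

Lemma findim (V : lmodType A) (HV : HC_block_mod G rel V) (HVs : simple_mod V) (u : V) :
  u != 0 -> (forall x, J x -> x *: u = 0) -> part_findim G rel r0 V.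
Proof.
move=> hu huJ; exists nq, (fun i => pB HV r0 (q i *: u)) => v hv.
have [a ha] := simple_gen HVs hu v.
have [mu [x [y [hx hy he]]]] := hQ a.
exists mu; rewrite -(pB_part HG HE HV Hr0 hv) ha.
exact: (pB_expand HV HVs hu huJ hx hy he).
Qed.

Lemma bound t (Vs : 'I_t -> lmodType A) (HVi : forall j, HC_block_mod G rel (Vs j))
  (hs : forall j, simple_mod (Vs j)) (us : forall j, Vs j) :
  (forall j, us j != 0) -> (forall j x, J x -> x *: us j = 0) ->
  (forall i j, i != j -> ~ mod_iso (Vs i) (Vs j)) -> (t <= nq)%N.
Proof.
move=> hnz huJ hni; rewrite leqNgt; apply/negP => hlt.
have := density hs hnz hni; case/fin_all_exists => aa haa.
have : forall l, exists p : (('I_nq -> k) * (A * A))%type,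
    [/\ rightGen Is p.2.1, leftGen J p.2.2 & aa l = \sum_(i < nq) p.1 i *: q i + p.2.1 + p.2.2].
  by move=> l; have [mu [x [y [h1 h2 h3]]]] := hQ (aa l); exists (mu, (x, y)).
case/fin_all_exists => pp hpp.
have [lam [[l0 hl0] hlam]] := dependence (fun l i => (pp l).1 i) hlt.
pose V := Vs l0; pose u := us l0.
pose P := pB (HVi l0) r0.
have hsum1 : \sum_(l < t) (lam l)%:A *: P (aa l *: u) = (lam l0)%:A *: u.
  rewrite /P /u (bigD1 l0) //= big1 ?addr0.
    by case: (haa l0) => -> _; rewrite (pB_part HG HE (HVi l0) Hr0 (u_part (huJ l0))).
  move=> l hl; case: (haa l) => _ ->; last by rewrite eq_sym.
  by rewrite (pB0 HG HE (HVi l0) Hr0) scaler0.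
have hsum2 : \sum_(l < t) (lam l)%:A *: P (aa l *: u) = 0.
  have -> : \sum_(l < t) (lam l)%:A *: P (aa l *: u) =
     \sum_(l < t) (lam l)%:A *: \sum_(i < nq) ((pp l).1 i)%:A *: P (q i *: u).
    apply: eq_bigr => l _; case: (hpp l) => h1 h2 h3; rewrite /P /u.
    by rewrite (pB_expand (HVi l0) (hs l0) (hnz l0) (huJ l0) h1 h2 h3).
  have -> : \sum_(l < t) (lam l)%:A *: \sum_(i < nq) ((pp l).1 i)%:A *: P (q i *: u) =
     \sum_(i < nq) \sum_(l < t) (lam l * (pp l).1 i)%:A *: P (q i *: u).
    rewrite [RHS]exchange_big /=; apply: eq_bigr => l _.
    by rewrite scaler_sumr; apply: eq_bigr => i _; rewrite scalerA alg_mul.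
  rewrite big1 // => i _; rewrite -scaler_suml.
  have -> : \sum_l (lam l * (pp l).1 i)%:A = (\sum_l lam l * (pp l).1 i)%:A :> A.
    by rewrite scaler_suml.
  by rewrite hlam scale0r scale0r.
have h0 : (lam l0)%:A *: u = 0 by rewrite -hsum1 hsum2.
by move/eqP: (hnz l0); apply; apply: (alg_scale0 hl0 h0).
Qed.

End ModMain.

Section Final.
Variables (k : fieldType) (A : algType k) (G : A -> Prop)
  (rel : (A -> Prop) -> (A -> Prop) -> Prop) (r0 : A -> Prop).
Hypothesis HG : is_subalg G.

Lemma descent (V : lmodType A) (v : V) :
  part (@modact _ _ V) (@is0 _ _ V) G rel r0 v -> v != 0 ->
  exists m, cls G rel r0 m /\ exists u : V, u != 0 /\ forall x, m x -> x *: u = 0.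
Proof.
move=> [I [/Wset_eq [s [hs ->]] hk]].
elim: s v hs hk => [|m s IH] v /=.
  by move=> _ hk hv; move: hv; have := hk 1 (G1 HG); rewrite /is0 /modact scale1r => ->; rewrite eqxx.
move=> [hm hs] hk hv.
case: (Classical_Prop.classic (forall y, prodI G s y -> y *: v = 0)) => hall.
  exact: (IH v hs hall hv).
have [y [hy hyv]] : exists y, prodI G s y /\ y *: v != 0.
  apply: Classical_Prop.NNPP => hno; apply: hall => y hy.
  by apply/eqP; apply: Classical_Prop.NNPP => hne; apply: hno; exists y; split=> //; apply/negP.
exists m; split=> //; exists (y *: v); split=> // x hx.
by rewrite scalerA; apply: (hk (x * y)); apply: idealMul_in.
Qed.

Variables (nB : nat) (ms : 'I_nB -> A -> Prop).

Definition Lc (s : seq 'I_nB) := [seq ms i | i <- s & asb (cls G rel r0 (ms i))].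

Lemma Lc_all s : allP (cls G rel r0) (Lc s).
Proof.
elim: s => [|i s IH] //=; rewrite /Lc /=.
by case: (asbP (cls G rel r0 (ms i))) => h //=; split.
Qed.

Lemma Lc_sub s i : i \in s -> cls G rel r0 (ms i) -> incl (prodI G (Lc s)) (ms i).
Proof.
elim: s => [|j s IH] //; rewrite inE => hi hc.
have hall : allP (ideal2 G) (Lc s) by apply: allP_mono (Lc_all s) => m /cls_ideal.
rewrite /Lc /=; case: (asbP (cls G rel r0 (ms j))) => hj /=.
- case/orP: hi => [/eqP ->|hi].
  + by apply: prodI_head => //; apply: cls_ideal hj.
  + move=> x hx; apply: IH => //.
    apply: (idealMul_subR (proj1 (prodI_ideal HG hall)) (li_sub (proj1 (cls_ideal hj)))) hx.
- case/orP: hi => [/eqP hij|hi]; first by move: hj; rewrite -hij.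
  exact: IH.
Qed.

End Final.

Theorem mainTheorem3 (k : fieldType) (A : algType k) (G : A -> Prop)
  (rel : (A -> Prop) -> (A -> Prop) -> Prop) (r0 : A -> Prop) :
  is_subalg G -> equiv_on_cfs G rel -> strong_HC_block_subalg G rel ->
  cfs G r0 -> finite_class G rel r0 -> noetherian G ->
  ABB_fg_left G (cls G rel r0) -> ABB_fg_right G (cls G rel r0) ->
  (exists (n : nat) (Vs : 'I_n -> lmodType A),
     forall V : lmodType A, simple_mod V -> HC_block_mod G rel V ->
       in_supp (@modact _ _ V) (@is0 _ _ V) G rel r0 ->
       exists i, mod_iso V (Vs i)) /\
  (forall V : lmodType A, simple_mod V -> HC_block_mod G rel V ->
     part_findim G rel r0 V).
Proof.
move=> HG HE HS Hr0 HF HN HL HR.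
have [nB [ms hms]] := HF.
pose J := prodI G (Lc G rel r0 ms (enum 'I_nB)).
have hJ : Wset G (cls G rel r0) J.
  by exists (Lc G rel r0 ms (enum 'I_nB)); split; [apply: Lc_all|].
have hJsub : forall m, cls G rel r0 m -> incl J m.
  move=> m hm; have [i hi] := hms m hm.
  have e : m = ms i by apply: pred_ext.
  rewrite e in hm *; apply: Lc_sub => //; by rewrite mem_enum.
have [[hblk hstr] _] := HS r0 Hr0 J hJ.
have [Is [hIs hIsk]] := hstr r0 Hr0.
have hIsi := Wset_ideal HG hIs.
have hIsf : fin_codim G Is.
  have [s [hs ->]] := Wset_eq hIs.
  by apply: fin_codim_prodI => //; apply: allP_mono hs => m [].
have [nq [q hQ]] := Qspan_ex hIs hJ hIsf HL.
have hdecM : forall a : A, exists n (r : 'I_n -> A -> Prop) (w : 'I_n -> A),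
  [/\ (forall i, cfs G (r i)), (forall i j, i != j -> ~ rel (r i) (r j)),
      (forall i, part (fun x (a : A) => x * a) (leftGen J) G rel (r i) (w i))
    & leftGen J (a - \sum_(i < n) w i)].
  by case: hblk.
have huex : forall V : lmodType A, in_supp (@modact _ _ V) (@is0 _ _ V) G rel r0 ->
    exists u : V, u != 0 /\ forall x, J x -> x *: u = 0.
  move=> V [v [hv hv0]].
  have [m [hm [u [hu hmu]]]] := descent HG hv (introN eqP hv0).
  by exists u; split=> // x hx; apply: hmu; apply: (hJsub m hm).
split.
- pose goodV (V : lmodType A) := [/\ simple_mod V, HC_block_mod G rel V &
     in_supp (@modact _ _ V) (@is0 _ _ V) G rel r0].
  pose Pfam t := exists Vs : 'I_t -> lmodType A, (forall j, goodV (Vs j)) /\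
     forall i j, i != j -> ~ mod_iso (Vs i) (Vs j).
  have hbnd : forall t, Pfam t -> (t <= nq)%N.
    move=> t [Vs [hg hni]].
    have : forall j, exists u : Vs j, u != 0 /\ forall x, J x -> x *: u = 0.
      by move=> j; case: (hg j) => _ _ /huex.
    case/fin_all_exists => us hus.
    have hHV : forall j, HC_block_mod G rel (Vs j) by move=> j; case: (hg j).
    have hsV : forall j, simple_mod (Vs j) by move=> j; case: (hg j).
    have hnz : forall j, us j != 0 by move=> j; case: (hus j).
    have hJu : forall j x, J x -> x *: us j = 0 by move=> j; case: (hus j).
    exact: (bound HG HE Hr0 hJ hIsi hIsk hdecM hQ hHV hsV hnz hJu hni).
  have hex : exists t, asb (Pfam t).
    exists 0%N; apply: asbT; exists (fun _ => (A^o : lmodType A)).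
    by split=> [[]//|[]//].
  have hub : forall t, asb (Pfam t) -> (t <= nq)%N by move=> t /asbP; apply: hbnd.
  case: (ex_maxnP hex hub) => t0 /asbP [Vs [hg hni]] hmax.
  exists t0, Vs => V HVs HV hsupp.
  apply: Classical_Prop.NNPP => hno.
  have hno' : forall i, ~ mod_iso V (Vs i) by move=> i h; apply: hno; exists i.
  pose Vs' (j : 'I_t0.+1) := if unlift ord_max j is Some j' then Vs j' else V.
  have : asb (Pfam t0.+1).
    apply: asbT; exists Vs'; split.
    - by move=> j; rewrite /Vs'; case: (unlift ord_max j) => [j'|] //; split.
    - move=> i j; rewrite /Vs'.
      case: (unliftP ord_max i) => [i'|] ->; case: (unliftP ord_max j) => [j'|] ->;
        rewrite ?liftK ?unlift_none => hij.
      + apply: hni; apply: contraNneq hij => ->; done.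
      + by move/mod_iso_sym; apply: hno'.
      + exact: hno'.
      + by rewrite eqxx in hij.
  by move/hmax; rewrite ltnn.
- move=> V HVs HV.
  case: (Classical_Prop.classic (in_supp (@modact _ _ V) (@is0 _ _ V) G rel r0)) => hsupp.
  + have [u [hu huJ]] := huex V hsupp.
    exact: (findim HG HE Hr0 hIsi hIsk hdecM hQ HV HVs hu huJ).
  + exists 0%N, (fun _ => 0) => v hv; exists (fun _ => 0); rewrite big_ord0.
    by apply: Classical_Prop.NNPP => hne; apply: hsupp; exists v.
Qed.
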